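(* Let $t \in \mathbb{N}$. For a PLD realization $L$, define the random variables \[ \psi^{\mathrm{rem}}_{t}(L) \coloneqq \ln\!\left(\frac{1}{t}\Big(e^{L} + \sum_{i \in [t-1]} e^{-\widetilde{L}_{i}}\Big)\right), \qquad \psi^{\mathrm{add}}_{t}(L) \coloneqq -\ln\!\left(\frac{1}{t} \sum_{i \in [t]} e^{-L_{i}}\right), \] where $L, L_1, \ldots, L_t$ are independent copies of $L$, and $\widetilde{L}_1, \ldots, \widetilde{L}_{t-1}$ are independent copies of the PLD dual $\widetilde{L}$ of $L$ (independent of $L$). Then for any two distributions $P, Q$ on a common domain $\Omega$, $\mathcal{L}_{\bar{P}_{t}/Q^{t}}$ is distributed as $\psi^{\mathrm{rem}}_{t}(\mathcal{L}_{P/Q})$ and $\mathcal{L}_{Q^{t}/\bar{P}_{t}}$ is distributed as $\psi^{\mathrm{add}}_{t}(\mathcal{L}_{Q/P})$.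
   Context: Privacy loss random variable: for distributions $P,Q$ on $\Omega$, $\mathcal{L}_{P/Q}$ is the random variable $\ln\big(P(\omega)/Q(\omega)\big)$ with $\omega \sim P$ (values in $[-\infty,\infty]$). A discrete random variable $L$ on $[-\infty,\infty]$ with PMF $f_L$ is a PLD realization if $\mathbb{E}[e^{-L}] \le 1$ and $f_L(-\infty)=0$; its PLD dual $\widetilde{L}$ has PMF $f_{\widetilde{L}}(l) = f_L(-l) e^{l}$ for finite $l$ and an atom at $+\infty$ of mass $1 - \mathbb{E}[e^{-L}]$. $Q^{t}$ denotes the product distribution of $t$ independent draws from $Q$ on $\Omega^t$, and $\bar{P}_{t} \coloneqq \frac{1}{t}\sum_{i \in [t]} Q^{i-1} \times P \times Q^{t-i}$ (the output distribution of random allocation of one element to one of $t$ steps). *)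

(* Defs.v *)
From HB Require Import structures.
From mathcomp Require Import all_boot all_order all_algebra.
From mathcomp Require Import all_classical all_reals all_analysis.

Set Implicit Arguments.
Unset Strict Implicit.
Unset Printing Implicit Defensive.
Import Order.TTheory GRing.Theory Num.Theory.

Local Open Scope classical_set_scope.
Local Open Scope ring_scope.

Definition is_pmf (R : realType) (Ω : choiceType) (P : Ω -> R) : Prop :=
  (forall w, 0 <= P w) /\ (\esum_(w in [set: Ω]) (P w)%:E = 1)%E.

Definition ploss (R : realType) (Ω : Type) (P Q : Ω -> R) (w : Ω) : \bar R :=
  if P w == 0 then -oo%E
  else if Q w == 0 then +oo%E
  else (ln (P w / Q w))%:E.

Definition law (R : realType) (Ω : choiceType) (P : Ω -> R) (X : Ω -> \bar R)
  (v : \bar R) : \bar R :=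
  \esum_(w in [set w | X w = v]) (P w)%:E.

(* Product distribution Q^t on Ω^t and the random allocation distribution
   bar P_t = 1/t sum_{i in [t]} Q^{i-1} x P x Q^{t-i}. *)
Definition prodQ (R : realType) (Ω : Type) (t : nat) (Q : Ω -> R)
  (w : {ffun 'I_t -> Ω}) : R :=
  \prod_(j < t) Q (w j).

Arguments prodQ {R Ω} t Q w.

Definition allocP (R : realType) (Ω : Type) (t : nat) (P Q : Ω -> R)
  (w : {ffun 'I_t -> Ω}) : R :=
  t%:R^-1 * \sum_(i < t) (P (w i) * \prod_(j < t | j != i) Q (w j)).

Arguments allocP {R Ω} t P Q w.

(* PLD realizations, represented by their pmf f : \bar R -> \bar R. *)
Definition exp_negL (R : realType) (f : \bar R -> \bar R) : \bar R :=
  \esum_(l in [set: \bar R]) (f l * expeR (- l))%E.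

Definition is_pmfE (R : realType) (f : \bar R -> \bar R) : Prop :=
  (forall l, 0 <= f l)%E /\ (\esum_(l in [set: \bar R]) f l = 1)%E.

Definition PLD_realization (R : realType) (f : \bar R -> \bar R) : Prop :=
  is_pmfE f /\ (exp_negL f <= 1)%E /\ f -oo%E = 0%E.

Definition PLD_dual (R : realType) (f : \bar R -> \bar R) (l : \bar R) : \bar R :=
  match l with
  | r%:E => (f (- r)%:E * (expR r)%:E)%E
  | +oo%E => (1 - exp_negL f)%E
  | -oo%E => 0%E
  end.

(* Law of g(X_1..X_n1, Y_1..Y_n2) where X_i ~ f1, Y_j ~ f2 are all mutually
   independent (pushforward of the product pmf). *)
Definition indep_law (R : realType) (f1 : \bar R -> \bar R) (n1 : nat)
  (f2 : \bar R -> \bar R) (n2 : nat)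
  (g : {ffun 'I_n1 -> \bar R} -> {ffun 'I_n2 -> \bar R} -> \bar R)
  (v : \bar R) : \bar R :=
  \esum_(xy in [set xy : {ffun 'I_n1 -> \bar R} * {ffun 'I_n2 -> \bar R} |
                 g xy.1 xy.2 = v])
     ((\prod_(i < n1) f1 (xy.1 i)) * (\prod_(j < n2) f2 (xy.2 j)))%E.

Arguments indep_law {R} f1 n1 f2 n2 g v.

Definition psi_rem_fun (R : realType) (t : nat)
  (x : {ffun 'I_1 -> \bar R}) (y : {ffun 'I_t.-1 -> \bar R}) : \bar R :=
  lne ((t%:R^-1)%:E * (expeR (x ord0) + \sum_(i < t.-1) expeR (- y i)))%E.

Definition psi_add_fun (R : realType) (t : nat)
  (x : {ffun 'I_t -> \bar R}) (_ : {ffun 'I_0 -> \bar R}) : \bar R :=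
  (- lne ((t%:R^-1)%:E * \sum_(i < t) expeR (- x i)))%E.

Definition psi_rem_law (R : realType) (t : nat) (f : \bar R -> \bar R) :
  \bar R -> \bar R :=
  indep_law f 1 (PLD_dual f) t.-1 (@psi_rem_fun R t).

Definition psi_add_law (R : realType) (t : nat) (f : \bar R -> \bar R) :
  \bar R -> \bar R :=
  indep_law f t (fun _ => 0%E) 0 (@psi_add_fun R t).

(* Main.v *)
Require Import Defs.
From HB Require Import structures.
From mathcomp Require Import all_boot all_order all_algebra all_fingroup.
From mathcomp Require Import all_classical all_reals all_analysis.

Module Helpers.
Import Order.TTheory GRing.Theory Num.Theory.
Set Implicit Arguments.
Unset Strict Implicit.
Unset Printing Implicit Defensive.
Local Open Scope classical_set_scope.
Local Open Scope ring_scope.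
Local Open Scope ereal_scope.


Section Esum.
Variable R : realType.

Lemma esumZl_fin (T : choiceType) (A : set T) (a : T -> \bar R) (r : R) :
  (0 <= r)%R -> (forall i, A i -> 0 <= a i) ->
  \esum_(i in A) (r%:E * a i) = r%:E * \esum_(i in A) a i.
Proof.
move=> r0 a0; rewrite /esum.
have dis F : fsets A F -> \sum_(x \in F) (r%:E * a x) = r%:E * \sum_(x \in F) a x.
  rewrite /fsets /= => -[finF FA]; rewrite !fsbig_finite// big_seq [X in _ * X]big_seq ge0_sume_distrr// => x.
  by rewrite in_fset_set// inE => /FA /a0.
have ne : [set \sum_(x \in F) a x | F in fsets A] != set0.
  by apply/set0P; exists 0; exists set0; [exact: fsets_set0|rewrite fsbig_set0].
rewrite -(ereal_supZl ne r0).
congr ereal_sup; apply/seteqP; split => y.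
  case=> F hF <-; exists (\sum_(x \in F) a x); first by exists F.
  by rewrite dis.
by case=> _ [F hF <-] <-; exists F => //; rewrite dis.
Qed.

Lemma esum_ge1 (T : choiceType) (A : set T) (a : T -> \bar R) k :
  A k -> 0 <= a k -> a k <= \esum_(i in A) a i.
Proof.
move=> Ak ak; apply: esum_ge; exists [set k].
  by split; [exact: finite_set1|move=> x ->].
by rewrite fsbig_set1.
Qed.

Lemma esumZl (T : choiceType) (A : set T) (a : T -> \bar R) (c : \bar R) :
  0 <= c -> (forall i, A i -> 0 <= a i) ->
  \esum_(i in A) (c * a i) = c * \esum_(i in A) a i.
Proof.
move: c => [r| |] c0 a0; last by [].
- by apply: esumZl_fin.
- have [[k Ak ak]|] := pselect (exists2 k, A k & a k != 0).
    have akp : 0 < a k by rewrite lt0e ak a0.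
    have h1 := @esum_ge1 _ A a k Ak (ltW akp).
    rewrite gt0_mulye; last exact: lt_le_trans h1.
    apply/eqP; rewrite eq_le leey /=.
    have := @esum_ge1 _ A (fun i => +oo * a i) k Ak.
    by rewrite gt0_mulye// => ->.
  move=> h.
  have z i : A i -> a i = 0.
    by move=> Ai; apply/eqP; apply: contra_notT h => ?; exists i.
  rewrite esum1; last by move=> i /z ->; rewrite mule0.
  by rewrite esum1 ?mule0.
Qed.

Lemma esumZr (T : choiceType) (A : set T) (a : T -> \bar R) (c : \bar R) :
  0 <= c -> (forall i, A i -> 0 <= a i) ->
  \esum_(i in A) (a i * c) = (\esum_(i in A) a i) * c.
Proof.
move=> c0 a0; rewrite muleC -esumZl//; apply: eq_esum => i _; exact: muleC.
Qed.

Lemma esum_mul (T1 T2 : choiceType) (A : set T1) (B : set T2) (a : T1 -> \bar R) (b : T2 -> \bar R) :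
  (forall i, A i -> 0 <= a i) -> (forall j, B j -> 0 <= b j) ->
  (\esum_(i in A) a i) * (\esum_(j in B) b j) =
  \esum_(k in A `*` B) (a k.1 * b k.2).
Proof.
move=> a0 b0.
rewrite -(@esum_esum _ _ _ A (fun=> B) (fun i j => a i * b j)); last first.
  by move=> i j Ai Bj; rewrite mule_ge0// ?a0 ?b0.
rewrite -esumZr//; last exact: esum_ge0.
by apply: eq_esum => i Ai; rewrite esumZl// a0.
Qed.

Lemma esum_eq_set (T : choiceType) (S1 S2 : set T) (a : T -> \bar R) :
  (forall i, a i != 0 -> (S1 i <-> S2 i)) ->
  \esum_(i in S1) a i = \esum_(i in S2) a i.
Proof.
move=> h; rewrite esum_mkcond [RHS]esum_mkcond; apply: eq_esum => i _.
have [->|ai] := eqVneq (a i) 0; first by case: ifP; case: ifP.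
have [f g] := h i ai.
case: (boolP (i \in S1)) => H1; case: (boolP (i \in S2)) => H2 //.
- by exfalso; move/negP: H2; apply; apply/mem_set/f/set_mem.
- by exfalso; move/negP: H1; apply; apply/mem_set/g/set_mem.
Qed.

End Esum.

Definition fcons (T : Type) n (x : T) (w : {ffun 'I_n -> T}) : {ffun 'I_n.+1 -> T} :=
  [ffun i => if unlift ord0 i is Some j then w j else x].

Definition ftail (T : Type) n (W : {ffun 'I_n.+1 -> T}) : {ffun 'I_n -> T} :=
  [ffun j => W (lift ord0 j)].

Lemma fcons0 (T : Type) n (x : T) (w : {ffun 'I_n -> T}) : fcons x w ord0 = x.
Proof. by rewrite ffunE unlift_none. Qed.

Lemma fconsS (T : Type) n (x : T) (w : {ffun 'I_n -> T}) j : fcons x w (lift ord0 j) = w j.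
Proof. by rewrite ffunE liftK. Qed.

Lemma fcons_ftail (T : Type) n (W : {ffun 'I_n.+1 -> T}) : fcons (W ord0) (ftail W) = W.
Proof.
apply/ffunP => i; rewrite ffunE; case: unliftP => [j ->|-> //].
by rewrite ffunE.
Qed.

Lemma ftail_fcons (T : Type) n (x : T) (w : {ffun 'I_n -> T}) : ftail (fcons x w) = w.
Proof. by apply/ffunP => j; rewrite ffunE fconsS. Qed.

Lemma fcons_inj (T : Type) n (x x' : T) (w w' : {ffun 'I_n -> T}) :
  fcons x w = fcons x' w' -> x = x' /\ w = w'.
Proof.
move=> e; split; first by rewrite -(fcons0 x w) e fcons0.
by rewrite -(ftail_fcons x w) e ftail_fcons.
Qed.

Section Prod.
Variable R : realType.

Lemma prod_esum (T : choiceType) n (S : 'I_n -> set T) (a : 'I_n -> T -> \bar R) :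
  (forall i w, S i w -> 0 <= a i w) ->
  \prod_(i < n) (\esum_(w in S i) a i w) =
  \esum_(w in [set w : {ffun 'I_n -> T} | forall i, S i (w i)]) \prod_(i < n) a i (w i).
Proof.
elim: n S a => [|n IH] S a a0.
  rewrite big_ord0.
  have -> : [set w : {ffun 'I_0 -> T} | forall i, S i (w i)] = [set (ffun0 (card_ord 0) : {ffun 'I_0 -> T})].
    apply/seteqP; split => w _ /=; last by case.
    by apply/ffunP => -[].
  by rewrite esum_set1 big_ord0.
rewrite big_ord_recl (IH (fun i => S (lift ord0 i)) (fun i => a (lift ord0 i))); last first.
  by move=> i w; apply: a0.
rewrite esum_mul; last 2 first.
- by move=> w; apply: a0.
- by move=> w Sw; apply: prode_ge0 => i _; apply: a0.
rewrite (reindex_esum (S ord0 `*` [set w : {ffun 'I_n -> T} | forall i, S (lift ord0 i) (w i)])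
   _ (fun p => fcons p.1 p.2)).
  apply: eq_esum => -[x w] _ /=; rewrite big_ord_recl fcons0.
  congr (_ * _); apply: eq_bigr => i _; by rewrite fconsS.
split.
- move=> [x w] /= [Sx Sw] i; case: (unliftP ord0 i) => [j ->|->].
  + by rewrite fconsS.
  + by rewrite fcons0.
- move=> [x w] [x' w'] _ _ /= e; by have [-> ->] := fcons_inj e.
- move=> W /= SW; exists (W ord0, ftail W); last exact: fcons_ftail.
  by split => //= j; rewrite ffunE.
Qed.
End Prod.

Definition ffmap (T U : Type) n (X : T -> U) (w : {ffun 'I_n -> T}) : {ffun 'I_n -> U} :=
  [ffun i => X (w i)].

Section Laws.
Variable R : realType.

Lemma law_prod (Ω : choiceType) n (P : Ω -> R) (X : Ω -> \bar R) (x : {ffun 'I_n -> \bar R}) :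
  (forall w, (0 <= P w)%R) ->
  \prod_(i < n) law P X (x i) =
  \esum_(w in [set w | ffmap X w = x]) (\prod_(i < n) P (w i))%:E.
Proof.
move=> P0; rewrite /law prod_esum; last by move=> i w _; rewrite lee_fin.
have -> : [set w : {ffun 'I_n -> Ω} | forall i, [set w0 | X w0 = x i] (w i)] =
          [set w | ffmap X w = x].
  apply/seteqP; split => w /=.
    by move=> h; apply/ffunP => i; rewrite ffunE h.
  by move=> <- i; rewrite ffunE.
by apply: eq_esum => w _; rewrite prodEFin.
Qed.

Lemma indep_law_E n1 n2 (Ω : choiceType) (P1 P2 : Ω -> R) (X1 X2 : Ω -> \bar R)
  (f1 f2 : \bar R -> \bar R) g v :
  (forall w, (0 <= P1 w)%R) -> (forall w, (0 <= P2 w)%R) ->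
  (forall x : {ffun 'I_n1 -> \bar R}, \prod_(i < n1) f1 (x i) = \prod_(i < n1) law P1 X1 (x i)) ->
  (forall y : {ffun 'I_n2 -> \bar R}, \prod_(j < n2) f2 (y j) = \prod_(j < n2) law P2 X2 (y j)) ->
  indep_law f1 n1 f2 n2 g v =
  \esum_(ab in [set ab : {ffun 'I_n1 -> Ω} * {ffun 'I_n2 -> Ω} |
                g (ffmap X1 ab.1) (ffmap X2 ab.2) = v])
     ((\prod_(i < n1) P1 (ab.1 i)) * (\prod_(j < n2) P2 (ab.2 j)))%:E.
Proof.
move=> P10 P20 h1 h2; rewrite /indep_law.
transitivity (\esum_(xy in [set xy : {ffun 'I_n1 -> \bar R} * {ffun 'I_n2 -> \bar R} |
                 g xy.1 xy.2 = v])
   \esum_(k in [set w | ffmap X1 w = xy.1] `*` [set w | ffmap X2 w = xy.2])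
     ((\prod_(i < n1) P1 (k.1 i))%:E * (\prod_(j < n2) P2 (k.2 j))%:E)).
  apply: eq_esum => xy _; rewrite h1 h2 !law_prod// esum_mul//.
  - by move=> w _; rewrite lee_fin; apply: prodr_ge0 => i _.
  - by move=> w _; rewrite lee_fin; apply: prodr_ge0 => i _.
rewrite esum_esum; last first.
  by move=> i j _ _; rewrite mule_ge0// lee_fin; apply: prodr_ge0 => k _.
rewrite (reindex_esum
  [set ab : {ffun 'I_n1 -> Ω} * {ffun 'I_n2 -> Ω} | g (ffmap X1 ab.1) (ffmap X2 ab.2) = v]
  _ (fun ab => ((ffmap X1 ab.1, ffmap X2 ab.2), ab))).
  by apply: eq_esum => ab _ /=; rewrite EFinM.
split.
- move=> ab /= H; split => //.
- by move=> ab ab' _ _ e; exact: (congr1 snd e).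
- move=> [[x y] [a b]] /= [H [Ha Hb]]; exists (a, b) => /=.
    by rewrite Ha Hb.
  by rewrite Ha Hb.
Qed.
End Laws.

Section Dual.
Variable R : realType.

Lemma expR_ln_div (p q : R) : (0 < p)%R -> (0 < q)%R -> expR (ln (p / q)) = (p / q)%R.
Proof. by move=> p0 q0; rewrite lnK// posrE divr_gt0. Qed.

Lemma expR_Nln_div (p q : R) : (0 < p)%R -> (0 < q)%R -> expR (- ln (p / q)) = (q / p)%R.
Proof. by move=> p0 q0; rewrite expRN expR_ln_div// invf_div. Qed.

Lemma ln_div_swap (p q : R) : (0 < p)%R -> (0 < q)%R -> ln (q / p) = (- ln (p / q))%R.
Proof. by move=> p0 q0; rewrite -invf_div lnV// posrE divr_gt0. Qed.

Variable Ω : choiceType.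
Variables P Q : Ω -> R.
Hypothesis P0 : forall w, (0 <= P w)%R.
Hypothesis Q0 : forall w, (0 <= Q w)%R.

Lemma pos_of_neq0 (f : Ω -> R) w : (forall w, (0 <= f w)%R) -> f w != 0%R -> (0 < f w)%R.
Proof. by move=> f0 h; rewrite lt0r h f0. Qed.

Lemma exp_negL_pt w :
  (P w)%:E * expeR (- ploss P Q w) =
  (if (P w != 0%R) && (Q w != 0%R) then Q w else 0%R)%:E.
Proof.
rewrite /ploss; have [->|p0] := eqVneq (P w) 0%R; first by rewrite mul0e.
have [->|q0] := eqVneq (Q w) 0%R; first by rewrite /= mule0.
rewrite /= -EFinM expR_Nln_div ?pos_of_neq0//.
by rewrite mulrC divfK.
Qed.

Lemma exp_negL_law :
  exp_negL (law P (ploss P Q)) =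
  \esum_(w in [set: Ω]) (if (P w != 0%R) && (Q w != 0%R) then Q w else 0%R)%:E.
Proof.
rewrite /exp_negL /law.
transitivity (\esum_(l in [set: \bar R])
   \esum_(w in [set w | ploss P Q w = l]) ((P w)%:E * expeR (- ploss P Q w))).
  apply: eq_esum => l _; rewrite -esumZr ?expeR_ge0//; last first.
    by move=> w _; rewrite lee_fin.
  by apply: eq_esum => w /= ->.
rewrite esum_esum; last by move=> l w _ _; rewrite mule_ge0 ?expeR_ge0 ?lee_fin.
rewrite (reindex_esum [set: Ω] _ (fun w => (ploss P Q w, w))).
  by apply: eq_esum => w _ /=; rewrite exp_negL_pt.
split.
- by move=> w _ /=.
- by move=> w w' _ _ e; exact: (congr1 snd e).
- by move=> [l w] /= [_ <-]; exists w.
Qed.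

Hypothesis Psum : \esum_(w in [set: Ω]) (P w)%:E = 1.
Hypothesis Qsum : \esum_(w in [set: Ω]) (Q w)%:E = 1.

Lemma dual_law : PLD_dual (law P (ploss P Q)) = law Q (ploss Q P).
Proof.
apply/funext => -[r| |] /=.
- rewrite /law -esumZr; last 2 first.
  + by rewrite lee_fin expR_ge0.
  + by move=> w _; rewrite lee_fin.
  have -> : [set w | ploss P Q w = (- r)%:E] = [set w | ploss Q P w = r%:E].
    apply/seteqP; split => w /=; rewrite /ploss.
    + have [//|p0] := eqVneq (P w) 0%R; have [//|q0] := eqVneq (Q w) 0%R.
      by move=> [e]; rewrite ln_div_swap ?pos_of_neq0// e opprK.
    + have [//|q0] := eqVneq (Q w) 0%R; have [//|p0] := eqVneq (P w) 0%R.
      by move=> [e]; rewrite -e ln_div_swap ?pos_of_neq0// opprK.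
  apply: eq_esum => w /=; rewrite /ploss.
  have [//|q0] := eqVneq (Q w) 0%R; have [//|p0] := eqVneq (P w) 0%R.
  move=> [<-]; rewrite -EFinM expR_ln_div ?pos_of_neq0//.
  by rewrite mulrC divfK.
- rewrite exp_negL_law.
  pose A := [set w | (P w != 0%R) && (Q w != 0%R)].
  have memA w : (w \in A) = ((P w != 0%R) && (Q w != 0%R)).
    by apply/idP/idP => [/set_mem|/mem_set].
  have E := esumID A [set: Ω] (fun w => (Q w)%:E) (fun w _ => Q0 w).
  have X1 : \esum_(w in [set: Ω] `&` A) (Q w)%:E =
      \esum_(w in [set: Ω]) (if (P w != 0%R) && (Q w != 0%R) then Q w else 0%R)%:E.
    by rewrite esum_mkcondr; apply: eq_esum => w _; rewrite memA; case: ifP.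
  have X2 : \esum_(w in [set: Ω] `&` ~` A) (Q w)%:E = law Q (ploss Q P) +oo.
    rewrite /law; apply: esum_eq_set => w; rewrite eqe => q0.
    rewrite /ploss /= (negbTE q0) /=; split.
    + move=> [_ nA]; have -> : P w == 0%R.
        by apply: contra_notT nA => p0; rewrite /A /= p0 q0.
      by [].
    + have [p0|p0] := eqVneq (P w) 0%R => // _; split => //.
      by rewrite /A /= p0 eqxx.
  rewrite -X1 -X2 -Qsum E.
  have f1 : \esum_(w in [set: Ω] `&` A) (Q w)%:E \is a fin_num.
    rewrite ge0_fin_numE; last by apply: esum_ge0 => w _; rewrite lee_fin.
    apply: (le_lt_trans (y := 1)); last by rewrite ltry.
    rewrite -Qsum E leeDl//; by apply: esum_ge0 => w _; rewrite lee_fin.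
  by rewrite [X in X - _]addeC addeK.
- rewrite /law esum1// => w /=; rewrite /ploss.
  by have [->//|q0] := eqVneq (Q w) 0%R; case: ifP.
Qed.
End Dual.

Lemma ffmapE (T U : Type) n (X : T -> U) (w : {ffun 'I_n -> T}) i : ffmap X w i = X (w i).
Proof. by rewrite ffunE. Qed.



Section Pointwise.
Variables (R : realType) (Ω : choiceType) (P Q : Ω -> R).
Hypothesis P0 : forall w, (0 <= P w)%R.
Hypothesis Q0 : forall w, (0 <= Q w)%R.

Lemma allocP_eq t (w : {ffun 'I_t -> Ω}) : (forall i, Q (w i) != 0%R) ->
  allocP t P Q w = (t%:R^-1 * (\sum_(i < t) (P (w i) / Q (w i))) * prodQ t Q w)%R.
Proof.
move=> hQ; rewrite /allocP /prodQ -mulrA; congr (_ * _)%R.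
rewrite big_distrl /=; apply: eq_bigr => i _.
by rewrite [in RHS](bigD1 i)//= mulrA divfK.
Qed.

Lemma expeR_negL' x : Q x != 0%R -> expeR (- ploss Q P x) = (P x / Q x)%:E.
Proof.
move=> q0; rewrite /ploss (negbTE q0).
have [->|p0] := eqVneq (P x) 0%R; first by rewrite mul0r.
rewrite /= expR_Nln_div// ?pos_of_neq0//.
Qed.

Lemma expeR_L x : P x != 0%R -> Q x != 0%R -> expeR (ploss P Q x) = (P x / Q x)%:E.
Proof.
move=> p0 q0; rewrite /ploss (negbTE q0) (negbTE p0) /= expR_ln_div// ?pos_of_neq0//.
Qed.

Lemma sum_ratio_ge0 t (w : {ffun 'I_t -> Ω}) : (0 <= \sum_(i < t) (P (w i) / Q (w i)))%R.
Proof. by apply: sumr_ge0 => i _; rewrite divr_ge0. Qed.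

Lemma add_pt t (w : {ffun 'I_t -> Ω}) b : (0 < t)%N -> prodQ t Q w != 0%R ->
  ploss (prodQ t Q) (allocP t P Q) w = @psi_add_fun R t (ffmap (ploss Q P) w) b.
Proof.
move=> t0 hp.
have hQ i : Q (w i) != 0%R by move/prodf_neq0: hp; apply.
rewrite /ploss (negbTE hp) allocP_eq// /psi_add_fun.
have -> : \sum_(i < t) expeR (- ffmap (ploss Q P) w i) =
    (\sum_(i < t) (P (w i) / Q (w i)))%:E.
  by rewrite -sumEFin; apply: eq_bigr => i _; rewrite ffmapE expeR_negL'.
rewrite -EFinM.
set s := (\sum_(i < t) _)%R.
have tV : (0 < t%:R^-1 :> R)%R by rewrite invr_gt0 ltr0n.
have [s0|s0] := eqVneq s 0%R.
  by rewrite s0 mulr0 mul0r eqxx /= lexx.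
have sp : (0 < s)%R by rewrite lt0r s0 sum_ratio_ge0.
have ts : (0 < t%:R^-1 * s)%R by rewrite mulr_gt0.
rewrite mulf_eq0 (negbTE hp) orbF mulf_eq0 (negbTE s0) orbF.
rewrite invr_eq0 pnatr_eq0 (gtn_eqF t0) lne_EFin// -EFinN /=; congr EFin.
rewrite -[X in (X / _)%R]mul1r -mulf_div divff// mulr1 div1r lnV ?posrE//.
Qed.

Lemma prod_cond0 n (F : 'I_n.+1 -> R) :
  (\prod_(k < n.+1 | k != ord0) F k = \prod_(j < n) F (lift ord0 j))%R.
Proof.
rewrite big_mkcond big_ord_recl eqxx /= mul1r; apply: eq_bigr => j _.
by [].
Qed.

Lemma ge0_neqNy (s : \bar R) : 0 <= s -> s != -oo.
Proof. by case: s. Qed.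

Lemma rem_pt t' (a : {ffun 'I_1 -> Ω}) (b : {ffun 'I_t' -> Ω}) :
  P (a ord0) != 0%R -> (forall j, Q (b j) != 0%R) ->
  ploss (allocP t'.+1 P Q) (prodQ t'.+1 Q) (fcons (a ord0) b) =
  @psi_rem_fun R t'.+1 (ffmap (ploss P Q) a) (ffmap (ploss Q P) b).
Proof.
move=> p0 hb; set x := a ord0; set w := fcons x b.
have tV : (0 < t'.+1%:R^-1 :> R)%R by rewrite invr_gt0 ltr0n.
have T0pos : (0 < P x * \prod_(j < t') Q (b j))%R.
  rewrite mulr_gt0 ?pos_of_neq0//; apply: prodr_gt0 => j _.
  exact: pos_of_neq0.
have allocpos : (0 < allocP t'.+1 P Q w)%R.
  rewrite /allocP mulr_gt0// big_ord_recl.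
  rewrite prod_cond0 /w fcons0.
  have -> : (\prod_(j < t') Q (fcons x b (lift ord0 j)) = \prod_(j < t') Q (b j))%R.
    by apply: eq_bigr => j _; rewrite fconsS.
  apply: ltr_wpDr => //; apply: sumr_ge0 => i _; apply: mulr_ge0 => //.
  by apply: prodr_ge0.
have sum_ge0 : 0 <= \sum_(j < t') expeR (- ffmap (ploss Q P) b j).
  by apply: sume_ge0 => j _; exact: expeR_ge0.
rewrite {1}/ploss (negbTE (lt0r_neq0 allocpos)) /psi_rem_fun ffmapE.
have [q0|q0] := eqVneq (Q x) 0%R.
  have -> : prodQ t'.+1 Q w == 0%R by rewrite /prodQ big_ord_recl /w fcons0 q0 mul0r.
  have Lx : ploss P Q x = +oo by rewrite /ploss (negbTE p0) q0 eqxx.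
  rewrite -/x Lx /= addye ?ge0_neqNy// gt0_muley//.
have hQ i : Q (w i) != 0%R.
  by rewrite /w; case: (unliftP ord0 i) => [j ->|->]; rewrite ?fconsS ?fcons0.
have pq : (prodQ t'.+1 Q w != 0%R) by apply/prodf_neq0 => i _.
rewrite (negbTE pq) allocP_eq// expeR_L//.
have -> : \sum_(j < t') expeR (- ffmap (ploss Q P) b j) =
    (\sum_(j < t') (P (b j) / Q (b j)))%:E.
  by rewrite -sumEFin; apply: eq_bigr => i _; rewrite ffmapE expeR_negL'.
rewrite -EFinD -EFinM.
have -> : (P x / Q x + \sum_(j < t') P (b j) / Q (b j) =
           \sum_(i < t'.+1) P (w i) / Q (w i))%R.
  by rewrite big_ord_recl /w fcons0; congr (_ + _)%R; apply: eq_bigr => j _; rewrite fconsS.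
set s := (\sum_(i < t'.+1) _)%R.
have sp : (0 < s)%R.
  rewrite /s big_ord_recl; apply: ltr_wpDr.
    by apply: sumr_ge0 => i _; rewrite divr_ge0.
  by rewrite /w fcons0 divr_gt0 ?pos_of_neq0.
rewrite lne_EFin ?mulr_gt0// mulfK//.
Qed.
End Pointwise.

Section Sym.
Variables (R : realType) (Ω : choiceType) (P Q : Ω -> R).
Hypothesis P0 : forall w, (0 <= P w)%R.
Hypothesis Q0 : forall w, (0 <= Q w)%R.

Definition permw t (s : {perm 'I_t}) (w : {ffun 'I_t -> Ω}) : {ffun 'I_t -> Ω} :=
  [ffun j => w (s j)].

Lemma prodQ_perm t s w : prodQ t Q (permw s w) = prodQ t Q w.
Proof.
rewrite /prodQ [RHS](reindex_inj (@perm_inj _ s)); apply: eq_bigr => j _.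
by rewrite ffunE.
Qed.

Lemma inner_perm t (s : {perm 'I_t}) w i :
  (\prod_(j < t | j != i) Q (permw s w j) = \prod_(k < t | k != s i) Q (w k))%R.
Proof.
rewrite [RHS](reindex_inj (@perm_inj _ s)) /=; apply: eq_big => j.
  by rewrite (inj_eq perm_inj).
by rewrite ffunE.
Qed.

Lemma allocP_perm t s w : allocP t P Q (permw s w) = allocP t P Q w.
Proof.
rewrite /allocP; congr (_ * _)%R; rewrite [RHS](reindex_inj (@perm_inj _ s)).
by apply: eq_bigr => i _; rewrite ffunE inner_perm.
Qed.

Lemma permwK t (i0 i : 'I_t) : involutive (permw (tperm i0 i)).
Proof. by move=> w; apply/ffunP => j; rewrite !ffunE tpermK. Qed.

Lemma sym_esum t (i0 i : 'I_t) v (c : R) :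
  \esum_(w in [set w | ploss (allocP t P Q) (prodQ t Q) w = v])
     (c * (P (w i) * \prod_(j < t | j != i) Q (w j)))%:E =
  \esum_(w in [set w | ploss (allocP t P Q) (prodQ t Q) w = v])
     (c * (P (w i0) * \prod_(j < t | j != i0) Q (w j)))%:E.
Proof.
set S := [set w | _ = v].
rewrite (reindex_esum S S (permw (tperm i0 i))).
  apply: eq_esum => w _; rewrite inner_perm ffunE tpermR //.
split.
- by move=> w; rewrite /S /= /ploss allocP_perm prodQ_perm.
- move=> w w' _ _ e; by rewrite -(permwK i0 i w) e permwK.
- move=> w Sw; exists (permw (tperm i0 i) w); last exact: permwK.
  by move: Sw; rewrite /S /= /ploss allocP_perm prodQ_perm.
Qed.

Lemma symmetrize t (i0 : 'I_t) v :
  \esum_(w in [set w | ploss (allocP t P Q) (prodQ t Q) w = v]) (allocP t P Q w)%:E =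
  \esum_(w in [set w | ploss (allocP t P Q) (prodQ t Q) w = v])
     (P (w i0) * \prod_(j < t | j != i0) Q (w j))%:E.
Proof.
have t0 : (0 < t)%N by apply: leq_ltn_trans (ltn_ord i0).
have tn0 : (t%:R != 0 :> R)%R by rewrite pnatr_eq0 -lt0n.
set S := [set w | _ = v].
transitivity (\esum_(w in S) \sum_(i < t)
    (t%:R^-1 * (P (w i) * \prod_(j < t | j != i) Q (w j)))%:E).
  by apply: eq_esum => w _; rewrite sumEFin -mulr_sumr.
rewrite esum_sum; last first.
  move=> w i _ _; rewrite lee_fin mulr_ge0 ?invr_ge0 ?ler0n// mulr_ge0//.
  by apply: prodr_ge0.
under eq_bigr do rewrite (sym_esum i0).
rewrite -esum_sum; last first.
  move=> w i _ _; rewrite lee_fin mulr_ge0 ?invr_ge0 ?ler0n// mulr_ge0//.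
  by apply: prodr_ge0.
apply: eq_esum => w _; rewrite sumEFin sumr_const card_ord -mulrnAl.
have -> : (t%:R^-1 *+ t = 1 :> R)%R.
  by rewrite -[RHS](mulVf tn0) mulr_natr.
by rewrite mul1r.
Qed.
End Sym.

End Helpers.
Import Helpers.
Import Order.TTheory GRing.Theory Num.Theory.

Theorem mainTheorem2 (R : realType) (Ω : choiceType) (t : nat) (P Q : Ω -> R) :
  (0 < t)%N -> is_pmf P -> is_pmf Q ->
  law (allocP t P Q) (ploss (allocP t P Q) (prodQ t Q))
    = psi_rem_law t (law P (ploss P Q)) /\
  law (prodQ t Q) (ploss (prodQ t Q) (allocP t P Q))
    = psi_add_law t (law Q (ploss Q P)).
Proof.
Local Open Scope classical_set_scope.
Local Open Scope ring_scope.
Local Open Scope ereal_scope.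
move=> t0 [P0 Psum] [Q0 Qsum]; split; apply/funext => v.
- case: t t0 => [//|t'] _.
  rewrite /law (symmetrize P0 Q0 ord0) /psi_rem_law dual_law//.
  rewrite (@indep_law_E R 1 t' Ω P Q (ploss P Q) (ploss Q P))//.
  set S := [set w | _ = v].
  rewrite (reindex_esum [set ab : {ffun 'I_1 -> Ω} * {ffun 'I_t' -> Ω} |
      ploss (allocP t'.+1 P Q) (prodQ t'.+1 Q) (fcons (ab.1 ord0) ab.2) = v] S
      (fun ab => fcons (ab.1 ord0) ab.2)); last first.
    split.
    - by move=> ab.
    - move=> [a b] [a' b'] _ _ /= e; have [e1 e2] := fcons_inj e; congr (_, _) => //.
      by apply/ffunP => i; rewrite (ord1 i).
    - move=> w Sw; exists ([ffun _ => w ord0], ftail w) => /=.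
        by rewrite ffunE fcons_ftail.
      by rewrite ffunE fcons_ftail.
  transitivity (\esum_(ab in [set ab : {ffun 'I_1 -> Ω} * {ffun 'I_t' -> Ω} |
      ploss (allocP t'.+1 P Q) (prodQ t'.+1 Q) (fcons (ab.1 ord0) ab.2) = v])
      (\prod_(i < 1) P (ab.1 i) * \prod_(j < t') Q (ab.2 j))%:E).
    apply: eq_esum => -[a b] _ /=; rewrite fcons0 prod_cond0 big_ord1.
    by congr (_ * _)%:E; apply: eq_bigr => j _; rewrite fconsS.
  apply: esum_eq_set => -[a b] /=; rewrite big_ord1 eqe mulf_eq0 negb_or => /andP[pa hb].
  rewrite rem_pt//.
  by move=> j; move/prodf_neq0: hb; apply.
- rewrite /law /psi_add_law.
  rewrite (@indep_law_E R t 0 Ω Q Q (ploss Q P) (ploss Q P))//; last first.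
    by move=> y; rewrite !big_ord0.
  set S := [set w | _ = v].
  rewrite (reindex_esum [set ab : {ffun 'I_t -> Ω} * {ffun 'I_0 -> Ω} |
      ploss (prodQ t Q) (allocP t P Q) ab.1 = v] S (fun ab => ab.1)); last first.
    split.
    - by move=> ab.
    - move=> [a b] [a' b'] _ _ /= e; congr (_, _) => //.
      by apply/ffunP => -[].
    - move=> w Sw; exists (w, (ffun0 (card_ord 0) : {ffun 'I_0 -> Ω})) => //.
  transitivity (\esum_(ab in [set ab : {ffun 'I_t -> Ω} * {ffun 'I_0 -> Ω} |
      ploss (prodQ t Q) (allocP t P Q) ab.1 = v])
      (\prod_(i < t) Q (ab.1 i) * \prod_(j < 0) Q (ab.2 j))%:E).
    by apply: eq_esum => -[a b] _ /=; rewrite big_ord0 mulr1.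
  apply: esum_eq_set => -[a b] /=; rewrite big_ord0 mulr1 eqe => hp.
  by rewrite (add_pt P0 Q0 (ffmap (ploss Q P) b) t0 hp).
Qed.
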